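(* Let $I\ge 2$ and let $\bar A_1,\dots,\bar A_I$ be arrival processes such that each $\bar A_i$ is $(\lambda_i,\nu_i)$-constrained, with $\lambda_i>0$, $\nu_i\ge0$. Then their superposition $\bar A$ is $(\lambda,\nu)$-constrained with $$\lambda=\sum_{i=1}^I\lambda_i,\qquad \nu=\sum_{i=1}^I\nu_i+(I-1).$$
   Context: An arrival process is described by its arrival time function: a nondecreasing sequence $(\bar A(n))_{n\ge 1}$ of nonnegative real numbers, where $\bar A(n)$ is the arrival time of packet $n$. By convention $\bar A(0)=0$, and $\bar A(m,n):=\bar A(n)-\bar A(m)$ for integers $n\ge m\ge 0$. Write $x^+=\max\{x,0\}$. For constants $\lambda>0$ and $\nu\ge 0$, the process is called $(\lambda,\nu)$-constrained if $\bar A(m,n)\ge \frac{1}{\lambda}(n-m-\nu)^+$ for all integers $n\ge m\ge 0$. The superposition (aggregate) of arrival processes $\bar A_1,\dots,\bar A_I$ (each with $\bar A_i(0)=0$) is the arrival process $\bar A$ given by $\bar A(n)=\inf\{\max_{1\le i\le I}\bar A_i(m_i): m_1,\dots,m_I\ge 0 \text{ integers},\ m_1+\cdots+m_I=n\}$ for $n\ge 0$; equivalently, $\bar A(n)$ is the $n$-th smallest element (counted with multiplicity) of the multiset of all packet arrival times $\{\bar A_i(k): 1\le i\le I,\ k\ge 1\}$. *)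

(* Defs.v *)
From HB Require Import structures.
From mathcomp Require Import all_boot all_order all_algebra.
Set Implicit Arguments. Unset Strict Implicit. Unset Printing Implicit Defensive.
Import Order.TTheory GRing.Theory Num.Theory.
Local Open Scope ring_scope.

Definition arrival_process (R : realFieldType) (A : nat -> R) : Prop :=
  A 0%N = 0 /\ (forall n, 0 <= A n) /\ (forall m n, (m <= n)%N -> A m <= A n).

Definition pospart (R : realFieldType) (x : R) : R := Num.max x 0.

Definition constrained (R : realFieldType) (A : nat -> R) (lam nu : R) : Prop :=
  forall m n : nat, (m <= n)%N ->
    pospart ((n - m)%:R - nu) / lam <= A n - A m.

(* max_i A_i(m_i); the index 0 is harmless since all values are >= 0 *)
Definition maxval (R : realFieldType) (I n : nat) (A : 'I_I -> nat -> R)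
  (m : {ffun 'I_I -> 'I_n.+1}) : R :=
  \big[Num.max/0]_(i < I) A i (m i).

(* Superposition: Abar(n) = inf { max_i A_i(m_i) : m_1+...+m_I = n }.
   Each m_i <= n, so m ranges over the finite set of functions 'I_I -> 'I_(n+1)
   with sum n, and the inf is a min.  The neutral element max_i A_i(n) is an
   upper bound of (and, for I >= 1, dominated by a member of) the set, so it
   does not affect the value. *)
Definition superposition (R : realFieldType) (I : nat) (A : 'I_I -> nat -> R)
  (n : nat) : R :=
  let top := \big[Num.max/0]_(i < I) A i n in
  \big[Num.min/top]_(m : {ffun 'I_I -> 'I_n.+1} |
      (\sum_(i < I) (m i : nat))%N == n) maxval A m.

(* Main.v *)
Require Import Defs.
From HB Require Import structures.
From mathcomp Require Import all_boot all_order all_algebra.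
From mathcomp Require Import zify ring lra.
Import Order.TTheory GRing.Theory Num.Theory.
Local Open Scope ring_scope.

Lemma trunc_sum (F : nat -> nat) (m k : nat) :
  (\sum_(i < k) minn (F i) (m - \sum_(j < i) F j))%N
  = minn (\sum_(i < k) F i)%N m.
Proof.
elim: k => [|k IH]; first by rewrite !big_ord0 min0n.
rewrite !big_ord_recr /= IH.
set S := (\sum_(i < k) F i)%N. lia.
Qed.

Lemma reduce (I m : nat) (c : 'I_I -> nat) :
  (m <= \sum_(i < I) c i)%N ->
  exists b : {ffun 'I_I -> 'I_m.+1},
    (\sum_(i < I) (b i : nat))%N == m /\ forall i, (b i <= c i)%N.
Proof.
move=> hm.
pose G (j : nat) : nat := if (insub j : option 'I_I) is Some i then c i else 0%N.
have hG : forall i : 'I_I, G i = c i by move=> i; rewrite /G valK.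
have hle : forall i : 'I_I, (minn (G i) (m - \sum_(j < i) G j) < m.+1)%N.
  move=> i; rewrite ltnS; lia.
exists [ffun i : 'I_I => inord (minn (G i) (m - \sum_(j < i) G j))]; split.
  rewrite (eq_bigr (fun i : 'I_I => minn (G i) (m - \sum_(j < i) G j))); last first.
    by move=> i _; rewrite ffunE inordK.
  rewrite (trunc_sum G m I).
  have -> : (\sum_(i < I) G i = \sum_(i < I) c i)%N by apply: eq_bigr => i _; rewrite hG.
  apply/eqP; lia.
move=> i; rewrite ffunE inordK // -hG; lia.
Qed.

Fixpoint lastle (R : realFieldType) (f : nat -> R) (u : R) (a : nat) : nat :=
  match a with 0%N => 0%N | a'.+1 => if f a'.+1 <= u then a'.+1 else lastle R f u a' end.
Arguments lastle {R}.

Lemma lastle_le {R : realFieldType} (f : nat -> R) u a : (lastle f u a <= a)%N.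
Proof. elim: a => //= a IH; case: ifP => // _; exact: leqW. Qed.

Lemma lastle_val {R : realFieldType} (f : nat -> R) u a :
  f 0%N <= u -> f (lastle f u a) <= u.
Proof. move=> h0; elim: a => //= a IH; case: ifP => //. Qed.

Lemma lastle_next {R : realFieldType} (f : nat -> R) u a :
  (lastle f u a < a)%N -> u < f (lastle f u a).+1.
Proof.
elim: a => //= a IH; case: ifP => [_|h]; first by rewrite ltnn.
move=> _; have := lastle_le f u a; rewrite leq_eqVlt => /orP [/eqP ->|/IH //].
by rewrite ltNge h.
Qed.

Lemma S_le (R : realFieldType) (I : nat) (A : 'I_I -> nat -> R)
  (hA : forall i, arrival_process (A i)) (m : nat) (c : 'I_I -> nat) (u : R) :
  (m <= \sum_(i < I) c i)%N -> 0 <= u -> (forall i, A i (c i) <= u) ->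
  superposition A m <= u.
Proof.
move=> hm u0 hc; have [b [hb hbc]] := reduce _ _ _ hm.
rewrite /superposition; apply: (bigmin_inf b) => //.
rewrite /maxval; apply: bigmax_le => // i _.
apply: le_trans _ (hc i); have [_ [_ hmon]] := hA i; exact: hmon.
Qed.

Lemma S_ge (R : realFieldType) (I : nat) (A : 'I_I -> nat -> R)
  (hA : forall i, arrival_process (A i)) (hI : (0 < I)%N) (n : nat) (x : R) :
  (forall a : {ffun 'I_I -> 'I_n.+1}, (\sum_(i < I) (a i : nat))%N == n ->
      x <= maxval A a) ->
  x <= superposition A n.
Proof.
move=> h; rewrite /superposition; apply: le_bigmin => //.
pose i0 : 'I_I := Ordinal hI.
pose w : {ffun 'I_I -> 'I_n.+1} := [ffun i => if i == i0 then ord_max else ord0].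
have hw : (\sum_(i < I) (w i : nat))%N == n.
  rewrite (bigD1 i0) //= ffunE eqxx big1 ?addn0 // => i /negbTE hi.
  by rewrite ffunE hi.
apply: le_trans (h w hw) _; rewrite /maxval; apply: bigmax_le.
  exact: le_trans (proj1 (proj2 (hA i0)) n) (le_bigmax 0 (fun j => A j n) i0).
move=> i _; apply: le_trans _ (le_bigmax 0 (fun j => A j n) i).
have [_ [_ hmon]] := hA i; apply: hmon; rewrite -ltnS; exact: ltn_ord.
Qed.

Lemma maxL (R : realFieldType) (x y : R) : x <= Num.max x y.
Proof. by rewrite le_max lexx. Qed.

Theorem theorem2 (R : realFieldType) (I : nat) (hI : (2 <= I)%N)
  (A : 'I_I -> nat -> R) (lam nu : 'I_I -> R)
  (hA : forall i, arrival_process (A i))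
  (hlam : forall i, 0 < lam i) (hnu : forall i, 0 <= nu i)
  (hc : forall i, constrained (A i) (lam i) (nu i)) :
  constrained (superposition A) (\sum_(i < I) lam i)
    (\sum_(i < I) nu i + (I - 1)%:R).
Proof.
move=> m n hmn.
have hI0 : (0 < I)%N by apply: leq_trans hI.
set L := \sum_(i < I) lam i.
set N := \sum_(i < I) nu i.
have hhas : has predT (index_enum 'I_I).
  by apply/hasP; exists (Ordinal hI0); rewrite ?mem_index_enum.
have L0 : 0 < L.
  have := @ltr_sum R _ _ _ (fun _ => 0) lam hhas (fun i _ => hlam i).
  by rewrite big1.
have N0 : 0 <= N by apply: sumr_ge0 => i _.
rewrite lerBrDr; apply: S_ge => // a /eqP ha.
set t := maxval A a.
have hat : forall i, A i (a i) <= t.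
  move=> i; exact: (le_bigmax 0 (fun j => A j (a j)) i).
have t0 : 0 <= t.
  exact: le_trans (proj1 (proj2 (hA (Ordinal hI0))) _) (hat _).
have hmon : forall i p q, (p <= q)%N -> A i p <= A i q.
  by move=> i p q; have [_ [_ hm]] := hA i; exact: hm.
set x := (n - m)%:R - (N + (I - 1)%:R).
have hnm : (n - m)%:R = n%:R - m%:R :> R by rewrite natrB.
have hI1 : (I - 1)%:R = I%:R - 1 :> R by rewrite natrB.
have hsa : (\sum_(i < I) (a i : nat))%:R = n%:R :> R by rewrite ha.
rewrite natr_sum in hsa.
case: (lerP x 0) => hx.
  rewrite /pospart max_r // mul0r add0r.
  by apply: (S_le _ _ _ hA _ (fun i => a i)) => //; rewrite ha.
rewrite /pospart max_l; last exact: ltW.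
set d := x / L.
have d0 : 0 < d by apply: divr_gt0.
have hti : forall i, (a i)%:R - nu i <= lam i * t.
  move=> i; have := hc i 0%N (a i) (leq0n _).
  rewrite (proj1 (hA i)) subr0 subn0 /pospart ler_pdivrMr // => h.
  rewrite mulrC; apply: le_trans (maxL _ _ 0) (le_trans h _).
  by rewrite ler_pM2r // hat.
have hLt : x <= L * t.
  have : \sum_(i < I) ((a i)%:R - nu i) <= \sum_(i < I) lam i * t.
    by apply: ler_sum => i _; exact: hti.
  rewrite sumrB -mulr_suml hsa -/N -/L mulrC => h.
  apply: le_trans _ h; rewrite /x hnm.
  have : (0 : R) <= (I - 1)%:R by [].
  have : (0 : R) <= m%:R by [].
  lra.
have dt : d <= t by rewrite /d ler_pdivrMr // mulrC.
set u := t - d.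
have u0 : 0 <= u by rewrite subr_ge0.
pose b i := lastle (A i) u (a i).
have hb : forall i, (a i)%:R - (b i)%:R < lam i * d + 1 + nu i.
  move=> i; have := lastle_le (A i) u (a i); rewrite leq_eqVlt => /orP [/eqP e|lt].
    rewrite /b e subrr; have := hnu i; have : 0 < lam i * d by apply: mulr_gt0.
    lra.
  have hnx := lastle_next _ _ _ lt.
  have := hc i _ _ lt; rewrite natrB // -natr1 /pospart ler_pdivrMr // => h.
  have h2 : A i (a i) - A i (lastle (A i) u (a i)).+1 < d.
    have := hat i; rewrite /u in hnx; lra.
  have h3 := le_trans (maxL _ _ _) h.
  have h4 : (A i (a i) - A i (lastle (A i) u (a i)).+1) * lam i < d * lam i.
    by rewrite ltr_pM2r.
  rewrite /b; move: h3 h4; rewrite [d * _]mulrC; lra.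
have hsb : (m <= \sum_(i < I) b i)%N.
  have := ltr_sum hhas (fun i _ => hb i).
  rewrite sumrB hsa !big_split /= -mulr_suml -/L -/N sumr_const card_ord.
  rewrite -natr_sum /d mulrC divfK ?gt_eqF // /x hnm hI1 => h.
  have : (m%:R : R) < (\sum_(i < I) b i)%N.+1%:R.
    rewrite -natr1; move: h; rewrite -[1 *+ I]/(I%:R); lra.
  by rewrite ltr_nat ltnS.
have hS : superposition A m <= u.
  apply: (S_le _ _ _ hA _ b _ hsb u0) => i.
  by apply: lastle_val; rewrite (proj1 (hA i)).
by rewrite addrC -lerBrDr.
Qed.
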